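(* Let $G=\mathbb{Z}_2\times\mathbb{Z}_4$, let $\theta$ be a normalised orthomorphism of $G$, let $x\in A_{22}$ and let $a\in A_{44}\setminus\theta(A_{44})$. Then $\theta(a)=ax$ and $\theta(ax)=ax\theta(x)$; moreover $A_{44}=\{a,ax\}$, $\theta(A_{44})=\{ax,\ ax\theta(x)\}$ and $A_{42}=\{ax\theta(x),\ a\theta(x)\}$.
   Context: $G$ is written multiplicatively with identity $e$; $o(g)$ is the order of $g$. A normalised orthomorphism of $G$ is a bijection $\theta\colon G\to G$ with $\theta(e)=e$ such that $x\mapsto x^{-1}\theta(x)$ is also a bijection of $G$. For such $\theta$: $A_{44}=\{x: o(x)=4, o(\theta(x))=4\}$, $A_{42}=\{x: o(x)=4, o(\theta(x))=2\}$, $A_{24}=\{x: o(x)=2, o(\theta(x))=4\}$, $A_{22}=\{x: o(x)=2, o(\theta(x))=2\}$; $\theta(S)$ denotes the image of a set $S$. *)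

(* Defs.v *)
From mathcomp Require Import all_boot all_fingroup all_algebra.
Set Implicit Arguments. Unset Strict Implicit. Unset Printing Implicit Defensive.

(* G = Z_2 x Z_4, as the external direct product of the (additive, viewed as
   finGroupType) cyclic groups 'Z_2 and 'Z_4; group law written multiplicatively. *)
Definition G : finGroupType := ('Z_2 * 'Z_4)%type.

Local Open Scope group_scope.

Definition normalised_orthomorphism (theta : G -> G) : Prop :=
  [/\ bijective theta, theta 1 = 1 & bijective (fun x => x^-1 * theta x)].

Definition Aij (i j : nat) (theta : G -> G) : {set G} :=
  [set x : G | (#[x] == i) && (#[theta x] == j)].

Definition A44 := Aij 4 4.
Definition A42 := Aij 4 2.
Definition A24 := Aij 2 4.
Definition A22 := Aij 2 2.

(* Main.v *)
Require Import Defs.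
From mathcomp Require Import all_boot all_fingroup all_algebra.
From mathcomp Require Import cyclic.
From Stdlib Require Import FunctionalExtensionality.
Local Open Scope group_scope.
Definition o2 (m : nat) (h : m < 2) : 'I_2 := Ordinal h.
Definition o4 (m : nat) (h : m < 4) : 'I_4 := Ordinal h.
Definition elems : seq G := [seq ((i, j) : G) | i <- [:: o2 0 isT; o2 1 isT],
   j <- [:: o4 0 isT; o4 1 isT; o4 2 isT; o4 3 isT]].
Lemma memel (g : G) : g \in elems.
Proof. case: g => [i j].
have [->|->] : i = o2 0 isT \/ i = o2 1 isT.
  by case: i => [[|[|m]] h]; [left|right|]; try apply: val_inj.
all: have [->|[->|[->|->]]] : j = o4 0 isT \/ j = o4 1 isT \/ j = o4 2 isT \/ j = o4 3 isT by
  case: j => [[|[|[|[|m]]]] h]; [left|right;left|right;right;left|right;right;right|]; try apply: val_inj.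
all: by vm_compute.
Qed.
Definition ordG (g : G) : nat := if g == 1 then 1%N else if g ^+ 2 == 1 then 2%N else 4%N.
Definition okp (p : seq (G * G)) : bool :=
  [&& uniq (map snd p), uniq [seq q.1^-1 * q.2 | q <- p] & all (fun q => (q.1 == 1) ==> (q.2 == 1)) p].
Definition step (S : seq (seq (G * G))) (g : G) :=
  flatten [seq [seq rcons p (g, y) | y <- elems & okp (rcons p (g, y))] | p <- S].
Definition search := foldl step [:: [::]] elems.
Definition lk (p : seq (G * G)) (g : G) : G := nth 1 (map snd p) (index g (map fst p)).
Definition in44 f g := (ordG g == 4%N) && (ordG (f g) == 4%N).
Definition img44 f g := has (fun y => in44 f y && (f y == g)) elems.
Definition chk (f : G -> G) : bool :=
  all (fun x => all (fun a =>
    [&& ordG x == 2%N, ordG (f x) == 2%N, in44 f a & ~~ img44 f a] ==>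
    [&& f a == a * x, f (a * x) == a * x * f x,
        all (fun g => in44 f g == ((g == a) || (g == a * x))) elems,
        all (fun g => img44 f g == ((g == a * x) || (g == a * x * f x))) elems &
        all (fun g => ((ordG g == 4%N) && (ordG (f g) == 2%N)) == ((g == a * x * f x) || (g == a * f x))) elems]) elems) elems.
Lemma chk_all : all (fun p => chk (lk p)) search.
Proof. vm_compute. reflexivity. Qed.

Lemma ordG_ok (g : G) : #[g] = ordG g.
Proof.
have h4 : g ^+ 4 = 1.
  have : all (fun g : G => g ^+ 4 == 1) elems = true by vm_compute.
  by move/allP/(_ g (memel g))/eqP.
have hp := order_gt0 g.
have d4 : #[g] %| 4 by rewrite order_dvdn h4.
have l4 := dvdn_leq (isT : 0 < 4) d4.
rewrite /ordG; case: eqP => [->|ng1]; first by rewrite order1.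
have n1 : #[g] != 1%N by rewrite order_eq1; apply/eqP.
have d2 : (#[g] %| 2) = (g ^+ 2 == 1) by rewrite order_dvdn.
case: eqP d2 => h2 d2.
  move: n1 hp l4 d2; case: #[g] => [|[|[|[|[|n]]]]] //.
move: n1 hp l4 d2 d4; case: #[g] => [|[|[|[|[|n]]]]] //.
Qed.

Section Bridge.
Variable theta : G -> G.
Hypothesis Hinj : injective theta.
Hypothesis Hphi : injective (fun g => g^-1 * theta g).
Hypothesis H1 : theta 1 = 1.
Let P (l : seq G) := [seq (g, theta g) | g <- l].

Lemma okP m : uniq m -> okp (P m).
Proof.
move=> um; rewrite /okp /P -!map_comp; apply/and3P; split.
- by rewrite map_inj_uniq // => u v /= e; exact: Hinj e.
- by rewrite map_inj_uniq // => u v /= e; exact: Hphi e.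
by apply/allP => q /mapP [h _ ->] /=; apply/implyP => /eqP ->; rewrite H1.
Qed.

Lemma invS l : forall S l0, P l0 \in S -> uniq (l0 ++ l) -> P (l0 ++ l) \in foldl step S l.
Proof.
elim: l => [|g l IH] S l0 h u /=; first by rewrite cats0.
rewrite -cat_rcons; apply: IH; last by rewrite cat_rcons.
rewrite /step /P map_rcons; apply/flattenP.
exists [seq rcons (P l0) (g, y) | y <- elems & okp (rcons (P l0) (g, y))].
  exact: (map_f (fun p => [seq rcons p (g, y) | y <- elems & okp (rcons p (g, y))]) h).
apply: map_f; rewrite mem_filter memel andbT -map_rcons; apply: okP.
by move: u; rewrite -cat_rcons cat_uniq => /andP[].
Qed.

Lemma Pin : P elems \in search.
Proof. apply: (invS elems [:: [::]] [::]); [by rewrite mem_seq1 | by vm_compute]. Qed.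

Lemma lkP : lk (P elems) = theta.
Proof.
apply: functional_extensionality => g.
have e1 : map fst (P elems) = elems by rewrite /P; elim: elems => //= ? ? ->.
have e2 : map snd (P elems) = map theta elems by rewrite /P; elim: elems => //= ? ? ->.
rewrite /lk e1 e2 (nth_map g) ?nth_index ?memel // ?index_mem ?memel //.
Qed.

Lemma chk_theta : chk theta.
Proof. by rewrite -lkP; apply: (allP chk_all _ Pin). Qed.
End Bridge.

Lemma in44E theta g : (g \in A44 theta) = in44 theta g.
Proof. by rewrite /A44 /Aij inE !ordG_ok. Qed.

Lemma img44E theta g : (g \in theta @: A44 theta) = img44 theta g.
Proof.
apply/imsetP/hasP => [[y yA ->]|[y _ /andP[yA /eqP <-]]].
  by exists y; rewrite ?memel // -in44E yA eqxx.
by exists y; rewrite ?in44E.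
Qed.

Theorem proposition1 (theta : G -> G) (x a : G) :
  normalised_orthomorphism theta ->
  x \in A22 theta ->
  a \in A44 theta :\: theta @: A44 theta ->
  [/\ theta a = a * x,
      theta (a * x) = a * x * theta x,
      A44 theta = [set a; a * x],
      theta @: A44 theta = [set a * x; a * x * theta x]
    & A42 theta = [set a * x * theta x; a * theta x]].
Proof.
case=> [[ti ti1 ti2] th1 [pi pi1 pi2]] hx ha.
have := @chk_theta theta (can_inj ti1) (can_inj pi1) th1.
move/allP/(_ x (memel x))/allP/(_ a (memel a))/implyP.
move: hx ha; rewrite /A22 /Aij !inE img44E !ordG_ok /in44 => /andP[-> ->] /and3P[-> -> ->].
case/(_ isT)/and5P => /eqP e1 /eqP e2 h3 h4 h5; split => //.
- by apply/setP => g; rewrite in44E !inE; apply/eqP; exact: (allP h3 g (memel g)).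
- by apply/setP => g; rewrite img44E !inE; apply/eqP; exact: (allP h4 g (memel g)).
- by apply/setP => g; rewrite /A42 /Aij !inE !ordG_ok; apply/eqP; exact: (allP h5 g (memel g)).
Qed.
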